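(* Let $S=\{0,1,2,\dots\}$, $\lambda,\mu>0$, $\theta=\lambda/\mu$, and let $X$ be the continuous-time Markov chain on $S$ with rates $q(i,i+1)=\lambda$; $q(i,i-k)=\mu$ for $i\ge1$, $1\le k\le i$; $q(i,i)=-(\lambda+i\mu)$; all other off-diagonal rates $0$. Let $\tau$ be a probability on $S$ with finite $m$-th moment for some integer $m\ge1$, $\mathbf P^{(\tau)}$ the law of $X$ with initial distribution $\tau$, $F^{(\tau)}_{X(t)}(x)=\mathbf P^{(\tau)}\{X(t)\le x\}$, $T(x)=\sum_{n\le x}\tau(n)$, $\Pi^*(x)=\sum_{n\le x}\pi^*(n)$ with $\pi^*(n)=\theta^n(n+1)/(\theta+1)_{n+1}$. Define $$h_m(x)=\sum_{\rho\ge0}\frac{e^{-\theta}\theta^\rho}{\rho!}(x+\rho)^{m-1}\ (x\ge0),\qquad \mathcal K_{h_m}(\tau,\pi^* )=\int_0^{\infty}h_m(x)|T(x)-\Pi^*(x)|\,dx.$$ Then for all $t\ge0$, $$\Big|\int_{\mathbb R}x^m\,d\big(F^{(\tau)}_{X(t)}(x)-\Pi^*(x)\big)\Big|\le m\,\mathcal K_{h_m}(\tau,\pi^* )\exp\{-\mu t-\theta(e^{-\mu t}+\mu t-1)\}.$$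
   Context: $(a)_n$ denotes the rising factorial $a(a+1)\cdots(a+n-1)$, $(a)_0=1$. *)

(* Defs.v *)
From Stdlib Require Import Reals.
From Coquelicot Require Import Coquelicot.
Open Scope R_scope.

Fixpoint rising (a : R) (n : nat) : R :=
  match n with
  | O => 1
  | S k => rising a k * (a + INR k)
  end.

Fixpoint sum_lt (f : nat -> R) (i : nat) : R :=
  match i with
  | O => 0
  | S k => sum_lt f k + f k
  end.

Definition pistar (theta : R) (n : nat) : R :=
  theta ^ n * INR (n + 1) / rising (theta + 1) (n + 1).

Definition cdf (f : nat -> R) (x : R) : R :=
  Series (fun n => if Rle_dec (INR n) x then f n else 0).

Definition h (m : nat) (theta : R) (x : R) : R :=
  Series (fun rho => exp (- theta) * theta ^ rho / INR (Factorial.fact rho)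
                     * (x + INR rho) ^ (m - 1)).

Definition is_prob (tau : nat -> R) : Prop :=
  (forall n, 0 <= tau n) /\ is_series tau 1.

(* Right-hand side of the Kolmogorov backward equation for the generator
   q(i,i+1) = lam, q(i,i-k) = mu (1 <= k <= i), q(i,i) = -(lam + i mu):
   sum_k q(i,k) p(k,j) = lam p(i+1,j) + mu sum_{l<i} p(l,j) - (lam+i mu) p(i,j) *)
Definition backward_rhs (lam mu : R) (p : nat -> nat -> R) (i j : nat) : R :=
  lam * p (S i) j + mu * sum_lt (fun l => p l j) i
  - (lam + INR i * mu) * p i j.

(* P is the transition function P(t)(i,j) = P{X(t)=j | X(0)=i} of the chain:
   a stochastic, right-continuous-at-0 solution of the backward equations
   with P(0) = I.  Since the chain is non-explosive, this solution is unique
   (it is the minimal Q-function). *)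
Definition is_transition_fn (lam mu : R) (P : R -> nat -> nat -> R) : Prop :=
  (forall t i j, 0 <= t -> 0 <= P t i j) /\
  (forall t i, 0 <= t -> is_series (fun j => P t i j) 1) /\
  (forall i j, P 0 i j = if Nat.eqb i j then 1 else 0) /\
  (forall i j, filterlim (fun s => P s i j) (at_right 0) (locally (P 0 i j))) /\
  (forall t i j, 0 < t ->
     is_derive (fun s => P s i j) t (backward_rhs lam mu (P t) i j)).

Definition law_at (tau : nat -> R) (P : R -> nat -> nat -> R) (t : R) (j : nat) : R :=
  Series (fun i => tau i * P t i j).

(* Main.v *)
Require Import Defs.
From Stdlib Require Import Reals Lra Lia Psatz Factorial.
From Coquelicot Require Import Coquelicot.
Open Scope R_scope.

Ltac req := match goal with |- ?a = ?b => change (@eq R a b) end.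

Lemma sum_lt_ext f g n : (forall i, (i < n)%nat -> f i = g i) -> sum_lt f n = sum_lt g n.
Proof. induction n; simpl; intros H; auto. rewrite IHn, H; auto. Qed.

Lemma sum_lt_plus f g n : sum_lt (fun i => f i + g i) n = sum_lt f n + sum_lt g n.
Proof. induction n; simpl; [lra|]. rewrite IHn; lra. Qed.

Lemma sum_lt_minus f g n : sum_lt (fun i => f i - g i) n = sum_lt f n - sum_lt g n.
Proof. induction n; simpl; [lra|]. rewrite IHn; lra. Qed.

Lemma sum_lt_scal c f n : sum_lt (fun i => c * f i) n = c * sum_lt f n.
Proof. induction n; simpl; [lra|]. rewrite IHn; lra. Qed.

Lemma sum_lt_le f g n : (forall i, (i < n)%nat -> f i <= g i) -> sum_lt f n <= sum_lt g n.
Proof. induction n; simpl; intros H; [lra|]. pose proof (H n ltac:(lia)). pose proof (IHn ltac:(intros; apply H; lia)). lra. Qed.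

Lemma sum_lt_nonneg f n : (forall i, (i < n)%nat -> 0 <= f i) -> 0 <= sum_lt f n.
Proof. intros H. replace 0 with (sum_lt (fun _ => 0) n). apply sum_lt_le; auto.
  induction n; simpl; auto. rewrite IHn; auto; lra. Qed.

Lemma sum_lt_abs f n : Rabs (sum_lt f n) <= sum_lt (fun i => Rabs (f i)) n.
Proof. induction n; simpl. rewrite Rabs_R0; lra.
  eapply Rle_trans. apply Rabs_triang. lra. Qed.

Lemma sum_lt_const c n : sum_lt (fun _ => c) n = INR n * c.
Proof. induction n; simpl sum_lt. simpl; lra. rewrite IHn, S_INR; lra. Qed.

Lemma sum_lt_add_range f p q : sum_lt f (p + q) = sum_lt f p + sum_lt (fun i => f (p + i)%nat) q.
Proof. induction q; simpl. rewrite Nat.add_0_r; lra. rewrite Nat.add_succ_r; simpl. rewrite IHq; lra. Qed.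

Lemma sum_lt_zero_tail f n M : (n <= M)%nat -> (forall i, (n <= i < M)%nat -> f i = 0) ->
  sum_lt f M = sum_lt f n.
Proof. intros H1 H2. replace M with (n + (M - n))%nat by lia. rewrite sum_lt_add_range.
  rewrite (sum_lt_ext (fun i => f (n + i)%nat) (fun _ => 0)). rewrite sum_lt_const; lra.
  intros i Hi; apply H2; lia. Qed.

Lemma sum_lt_swap (F : nat -> nat -> R) p q :
  sum_lt (fun i => sum_lt (fun j => F i j) q) p = sum_lt (fun j => sum_lt (fun i => F i j) p) q.
Proof. induction p; simpl. transitivity (sum_lt (fun _ => 0) q). rewrite sum_lt_const; lra.
  apply sum_lt_ext; auto.
  rewrite IHp. rewrite <- sum_lt_plus. auto. Qed.

Lemma sum_n_lt (a : nat -> R) N : sum_n a N = sum_lt a (S N).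
Proof. induction N. rewrite sum_O; simpl; ring. rewrite sum_Sn, IHN. simpl. reflexivity. Qed.

Lemma is_series_sum_lt_iff a l : is_series a l <-> is_lim_seq (fun N => sum_lt a N) l.
Proof. split; intros H.
  - apply is_lim_seq_incr_1. apply (is_lim_seq_ext (sum_n a)). intros; apply sum_n_lt. exact H.
  - apply is_lim_seq_incr_1 in H. apply (is_lim_seq_ext _ (sum_n a)) in H. exact H.
    intros; symmetry; apply sum_n_lt. Qed.

Lemma is_series_finite f n : is_series (fun i => if (i <? n)%nat then f i else 0) (sum_lt f n).
Proof. apply is_series_sum_lt_iff. apply is_lim_seq_ext_loc with (fun _ => sum_lt f n).
  exists n. intros N HN. rewrite (sum_lt_zero_tail _ n N); auto.
  apply sum_lt_ext. intros i Hi. destruct (Nat.ltb_spec i n); lia || auto.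
  intros i Hi. destruct (Nat.ltb_spec i n); lia || auto.
  apply is_lim_seq_const. Qed.

Lemma partial_le_series (a : nat -> R) (l : R) n : (forall k, 0 <= a k) -> is_series a l -> sum_lt a n <= l.
Proof. intros Ha H. apply is_series_sum_lt_iff in H.
  assert (Rbar_le (sum_lt a n) l). apply is_lim_seq_le_loc with (fun _ => sum_lt a n) (fun N => sum_lt a N); auto.
  exists n. intros N HN. replace N with (n + (N - n))%nat by lia. rewrite sum_lt_add_range.
  pose proof (sum_lt_nonneg (fun i => a (n + i)%nat) (N - n) ltac:(intros; apply Ha)). simpl in *. lra.
  apply is_lim_seq_const. simpl in H0; auto. Qed.

Lemma series_le_bound (a : nat -> R) (l : R) M : is_series a l -> (forall n, sum_lt a n <= M) -> l <= M.
Proof. intros H HM. apply is_series_sum_lt_iff in H.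
  assert (Rbar_le l M). apply is_lim_seq_le with (fun N => sum_lt a N) (fun _ => M); auto.
  apply is_lim_seq_const. simpl in H0; auto. Qed.

Lemma is_series_zero : is_series (fun _ : nat => 0) 0.
Proof. apply is_series_sum_lt_iff. apply is_lim_seq_ext with (fun _ => 0).
  intros n. rewrite sum_lt_const; lra. apply is_lim_seq_const. Qed.

Lemma is_series_sum_lt (F : nat -> nat -> R) (l : nat -> R) n :
  (forall k, is_series (fun i => F k i) (l k)) ->
  is_series (fun i => sum_lt (fun k => F k i) n) (sum_lt l n).
Proof. intros H. induction n; simpl.
  - exact is_series_zero.
  - apply (is_series_plus _ _ _ _ IHn (H n)). Qed.

Lemma is_derive_sum_lt (F dF : nat -> R -> R) n t :
  (forall k, is_derive (F k) t (dF k t)) ->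
  is_derive (fun s => sum_lt (fun k => F k s) n) t (sum_lt (fun k => dF k t) n).
Proof. intros H. induction n; simpl.
  - apply (is_derive_const 0).
  - apply (is_derive_plus _ _ _ _ _ IHn (H n)). Qed.

Lemma series_nonneg (a : nat -> R) (l : R) : (forall k, 0 <= a k) -> is_series a l -> 0 <= l.
Proof. intros Ha H. pose proof (partial_le_series a l 0 Ha H). simpl in H0; lra. Qed.

Lemma term_le_series (a : nat -> R) (l : R) n : (forall k, 0 <= a k) -> is_series a l -> a n <= l.
Proof. intros Ha H. pose proof (partial_le_series a l (S n) Ha H). simpl in H0.
  pose proof (sum_lt_nonneg a n ltac:(intros; apply Ha)). lra. Qed.

Definition RC (F : R -> R) := filterlim F (at_right 0) (locally (F 0)).

Lemma RC_eps F : RC F -> forall eps, 0 < eps -> exists d, 0 < d /\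
  forall r, 0 < r < d -> Rabs (F r - F 0) < eps.
Proof. intros H eps He. assert (HB := H (ball (F 0) eps) (locally_ball (F 0) (mkposreal eps He))).
  destruct HB as [d Hd]. exists d. split. apply cond_pos. intros r Hr.
  assert (Hb : ball 0 d r). { unfold ball; simpl; unfold AbsRing_ball, abs, minus, plus, opp; simpl.
    rewrite Ropp_0, Rplus_0_r, Rabs_pos_eq; lra. }
  specialize (Hd r Hb ltac:(lra)). unfold ball in Hd; simpl in Hd; unfold AbsRing_ball, abs, minus, plus, opp in Hd; simpl in Hd. exact Hd. Qed.

Lemma RC_cont F : continuous F 0 -> RC F.
Proof. intros H. unfold RC. eapply filterlim_filter_le_1. 2: exact H. apply filter_le_within. Qed.

Lemma RC_derive (F : R -> R) : ex_derive F 0 -> RC F.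
Proof. intros H; apply RC_cont. apply (ex_derive_continuous F), H. Qed.

Lemma RC_plus F G : RC F -> RC G -> RC (fun r => F r + G r).
Proof. intros HF HG. unfold RC.
  apply (filterlim_comp_2 F G Rplus HF HG). apply (filterlim_plus (F 0) (G 0)). Qed.

Lemma RC_mult F G : RC F -> RC G -> RC (fun r => F r * G r).
Proof. intros HF HG. unfold RC.
  apply (filterlim_comp_2 F G Rmult HF HG). apply (filterlim_mult (F 0) (G 0)). Qed.

Lemma RC_const c : RC (fun _ => c).
Proof. apply RC_cont. apply continuous_const. Qed.

Lemma RC_scal c F : RC F -> RC (fun r => c * F r).
Proof. intros H. apply (RC_mult (fun _ => c) F (RC_const c) H). Qed.

Lemma RC_minus F G : RC F -> RC G -> RC (fun r => F r - G r).
Proof. intros HF HG. unfold Rminus.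
  apply (RC_plus F (fun r => - G r) HF).
  assert (H := RC_scal (-1) G HG). unfold RC in *.
  eapply filterlim_ext. 2: { replace (- G 0) with (-1 * G 0) by ring. exact H. }
  intros; simpl; ring. Qed.

Lemma RC_ext F G : (forall r, F r = G r) -> RC F -> RC G.
Proof. intros E H. unfold RC in *. rewrite <- E. eapply filterlim_ext. 2: exact H. auto. Qed.

Lemma RC_sum_lt (F : nat -> R -> R) n : (forall k, RC (F k)) -> RC (fun r => sum_lt (fun k => F k r) n).
Proof. intros H. induction n; simpl. apply RC_const. apply (RC_plus _ _ IHn (H n)). Qed.

Lemma mono_lemma (F dF : R -> R) s : 0 < s ->
  (forall r, 0 < r <= s -> is_derive F r (dF r)) ->
  (forall r, 0 < r <= s -> dF r <= 0) -> RC F -> F s <= F 0.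
Proof. intros Hs HD Hneg HR. destruct (Rle_dec (F s) (F 0)) as [|Hc]; auto. exfalso.
  assert (He : 0 < F s - F 0) by lra.
  destruct (RC_eps F HR _ He) as [d [Hd Hd2]].
  set (r := Rmin (d/2) (s/2)).
  assert (Hr1 : 0 < r) by (unfold r; apply Rmin_glb_lt; lra).
  assert (Hr2 : r < d) by (unfold r; eapply Rle_lt_trans; [apply Rmin_l|lra]).
  assert (Hr3 : r < s) by (unfold r; eapply Rle_lt_trans; [apply Rmin_r|lra]).
  specialize (Hd2 r ltac:(lra)).
  destruct (MVT_gen F r s dF) as [c [Hc1 Hc2]].
  - intros x Hx. rewrite Rmin_left in Hx by lra. rewrite Rmax_right in Hx by lra. apply HD; lra.
  - intros x Hx. rewrite Rmin_left in Hx by lra. rewrite Rmax_right in Hx by lra.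
    apply continuity_pt_filterlim. apply (ex_derive_continuous F). eexists; apply HD; lra.
  - rewrite Rmin_left in Hc1 by lra. rewrite Rmax_right in Hc1 by lra.
    assert (dF c <= 0) by (apply Hneg; lra).
    assert (dF c * (s - r) <= 0) by (apply Rmult_le_0_r; lra).
    apply Rabs_def2 in Hd2. lra. Qed.

Lemma const_lemma (F : R -> R) s : 0 <= s ->
  (forall r, 0 < r -> is_derive F r 0) -> RC F -> F s = F 0.
Proof. intros Hs HD HR. destruct (Req_dec s 0). subst; auto.
  assert (0 < s) by lra.
  assert (F s <= F 0). apply (mono_lemma F (fun _ => 0)); auto. intros; apply HD; lra. intros; lra.
  assert (- F s <= - F 0). apply (mono_lemma (fun r => - F r) (fun _ => 0)); auto.
  intros. replace 0 with (opp 0 : R) by (unfold opp; simpl; ring). apply (is_derive_opp F). apply HD; lra.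
  intros; lra. apply (RC_scal (-1)) in HR. eapply RC_ext. 2: exact HR. intros; simpl; ring.
  lra. Qed.

Lemma pow_fact_lim x : 0 <= x -> forall eps, 0 < eps -> exists n, x ^ n / INR (fact n) < eps.
Proof. intros Hx eps He.
  assert (ex_series (fun n => x ^ n / INR (fact n))).
  { exists (exp x). apply (is_series_ext (fun k => scal (pow_n x k) (/ INR (fact k)))).
    intros n. unfold scal; simpl. unfold mult; simpl. rewrite pow_n_pow. unfold Rdiv; ring.
    apply is_exp_Reals. }
  apply ex_series_lim_0 in H. apply is_lim_seq_spec in H. destruct (H (mkposreal eps He)) as [N HN].
  exists N. specialize (HN N (Nat.le_refl _)). simpl in HN. rewrite Rminus_0_r in HN.
  eapply Rle_lt_trans. apply Rle_abs. exact HN. Qed.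

Lemma ex_series_pow_fact x : ex_series (fun n => x ^ n / INR (fact n)).
Proof. exists (exp x). apply (is_series_ext (fun k => scal (pow_n x k) (/ INR (fact k)))).
    intros n. unfold scal; simpl. unfold mult; simpl. rewrite pow_n_pow. unfold Rdiv; ring.
    apply is_exp_Reals. Qed.

Lemma is_series_exp x : is_series (fun n => x ^ n / INR (fact n)) (exp x).
Proof. apply (is_series_ext (fun k => scal (pow_n x k) (/ INR (fact k)))).
    intros n. unfold scal; simpl. unfold mult; simpl. rewrite pow_n_pow. unfold Rdiv; ring.
    apply is_exp_Reals. Qed.

Lemma pow_fact_le_exp x n : 0 <= x -> x ^ n / INR (fact n) <= exp x.
Proof. intros Hx. apply (term_le_series (fun n => x ^ n / INR (fact n))).
  intros k. apply Rdiv_le_0_compat. apply pow_le; auto. apply lt_0_INR, lt_O_fact.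
  apply is_series_exp. Qed.

Definition aa (lam mu t : R) := lam / mu * (1 - exp (- mu * t)).
Definition Kf (lam mu t : R) (i x : nat) : R :=
  if (i <=? x)%nat then exp (- (mu * (INR i + 1) + lam) * t) * aa lam mu t ^ (x - i) / INR (fact (x - i)) else 0.

Lemma Kf_derive lam mu t i x : mu <> 0 ->
  is_derive (fun s => Kf lam mu s i x) t
    (lam * Kf lam mu t (S i) x - (lam + mu * (INR i + 1)) * Kf lam mu t i x).
Proof. intros Hmu. unfold Kf.
  destruct (Nat.leb_spec i x) as [Hix|Hix].
  - destruct (Nat.leb_spec (S i) x) as [Hsx|Hsx].
    + replace (x - i)%nat with (S (x - S i)) by lia. set (n := (x - S i)%nat).
      unfold aa. rewrite fact_simpl, mult_INR. auto_derive. auto.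
      change (match n with 0%nat => 1 | S _ => INR n + 1 end) with (INR (S n)).
      rewrite !S_INR.
      replace (- (mu * (INR i + 1 + 1) + lam) * t) with ((- (mu * (INR i + 1) + lam) * t) + (- mu * t)) by ring.
      rewrite exp_plus. simpl pow.
      assert (INR (fact n) <> 0) by (apply not_0_INR, fact_neq_0).
      assert (INR n + 1 <> 0) by (pose proof (pos_INR n); lra).
      set (E1 := exp (- (mu * (INR i + 1) + lam) * t)). set (E2 := exp (- mu * t)). set (A := (lam / mu * (1 + - E2))). match goal with |- ?a = ?b => change (@eq R a b) end. replace (lam / mu * (1 - E2)) with A by (unfold A; ring). field. split; auto.
    + assert (x = i) by lia. subst. rewrite Nat.sub_diag. simpl.
      auto_derive. auto. match goal with |- ?a = ?b => change (@eq R a b) end. field.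
  - destruct (Nat.leb_spec (S i) x). lia.
    auto_derive. auto. match goal with |- ?a = ?b => change (@eq R a b) end. ring. Qed.

Lemma Kf_0 lam mu i x : Kf lam mu 0 i x = if (i =? x)%nat then 1 else 0.
Proof. unfold Kf, aa. replace (- mu * 0) with 0 by ring. replace (- (mu * (INR i + 1) + lam) * 0) with 0 by ring.
  rewrite exp_0, Rminus_eq_0, Rmult_0_r.
  destruct (Nat.leb_spec i x); destruct (Nat.eqb_spec i x); try lia.
  subst. rewrite Nat.sub_diag. simpl. field.
  replace (x - i)%nat with (S (x - i - 1)) by lia. rewrite pow_ne_zero by lia. unfold Rdiv; ring.
  auto. Qed.

Lemma Kf_gt lam mu t i x : (x < i)%nat -> Kf lam mu t i x = 0.
Proof. intros H. unfold Kf. destruct (Nat.leb_spec i x); auto; lia. Qed.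

Lemma aa_nonneg lam mu t : 0 < lam -> 0 < mu -> 0 <= t -> 0 <= aa lam mu t.
Proof. intros. unfold aa. apply Rmult_le_pos. apply Rlt_le, Rdiv_lt_0_compat; auto.
  assert (exp (- mu * t) <= 1). rewrite <- exp_0. destruct (Req_dec t 0). subst. rewrite Rmult_0_r. lra.
  apply Rlt_le, exp_increasing. nra. lra. Qed.

Lemma aa_le lam mu t : 0 < lam -> 0 < mu -> 0 <= t -> aa lam mu t <= lam / mu.
Proof. intros. unfold aa. assert (0 < lam/mu) by (apply Rdiv_lt_0_compat; auto).
  pose proof (exp_pos (- mu * t)). nra. Qed.

Lemma Kf_nonneg lam mu t i x : 0 < lam -> 0 < mu -> 0 <= t -> 0 <= Kf lam mu t i x.
Proof. intros. unfold Kf. destruct (_ <=? _)%nat; [|lra]. apply Rdiv_le_0_compat.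
  apply Rmult_le_pos. apply Rlt_le, exp_pos. apply pow_le, aa_nonneg; auto.
  apply lt_0_INR, lt_O_fact. Qed.

Lemma exp_le_1 y : y <= 0 -> exp y <= 1.
Proof. intros. rewrite <- exp_0. destruct (Req_dec y 0). subst; lra. apply Rlt_le, exp_increasing; lra. Qed.

Lemma Kf_le_exp lam mu t i x : 0 < lam -> 0 < mu -> 0 <= t -> Kf lam mu t i x <= exp (lam / mu).
Proof. intros. unfold Kf. destruct (_ <=? _)%nat.
  2: { left; apply exp_pos. }
  assert (exp (- (mu * (INR i + 1) + lam) * t) <= 1). apply exp_le_1.
  pose proof (pos_INR i). assert (0 <= (mu * (INR i + 1) + lam) * t) by (apply Rmult_le_pos; nra). lra.
  pose proof (pow_fact_le_exp (aa lam mu t) (x - i) (aa_nonneg lam mu t H H0 H1)).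
  assert (exp (aa lam mu t) <= exp (lam/mu)). destruct (Req_dec (aa lam mu t) (lam/mu)). rewrite H4; lra.
  apply Rlt_le, exp_increasing. pose proof (aa_le lam mu t H H0 H1). lra.
  assert (0 <= aa lam mu t ^ (x - i) / INR (fact (x - i))). apply Rdiv_le_0_compat. apply pow_le, aa_nonneg; auto.
  apply lt_0_INR, lt_O_fact.
  unfold Rdiv in *. rewrite Rmult_assoc. pose proof (exp_pos (- (mu * (INR i + 1) + lam) * t)).
  nra. Qed.

Lemma Kf_RC lam mu i x : mu <> 0 -> RC (fun s => Kf lam mu s i x).
Proof. intros. apply RC_derive. eexists. apply Kf_derive; auto. Qed.

Definition uu (th : R) (k : nat) : R := th ^ (S k) / rising (th + 1) (S k).

Lemma rising_pos th n : 0 <= th -> 0 < rising (th + 1) n.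
Proof. intros. induction n; simpl. lra. apply Rmult_lt_0_compat; auto. pose proof (pos_INR n); lra. Qed.

Lemma rising_ge_fact th n : 0 <= th -> INR (fact n) <= rising (th + 1) n.
Proof. intros. induction n. simpl; lra. rewrite fact_simpl, mult_INR, S_INR. simpl rising.
  rewrite Rmult_comm. pose proof (pos_INR n). apply Rmult_le_compat; try lra. apply pos_INR. Qed.

Lemma rising_S a n : rising a (S n) = rising a n * (a + INR n).
Proof. reflexivity. Qed.

Lemma pistar_sum th k : 0 <= th -> sum_lt (pistar th) (S k) = 1 - uu th k.
Proof. intros Hth. induction k.
  - simpl. unfold pistar, uu. simpl. field. lra.
  - change (sum_lt (pistar th) (S (S k))) with (sum_lt (pistar th) (S k) + pistar th (S k)).
    rewrite IHk. unfold pistar, uu.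
    assert (0 < rising (th + 1) k) by (apply rising_pos; auto).
    replace (S k + 1)%nat with (S (S k)) by lia. rewrite !rising_S, !S_INR. pose proof (pos_INR k). simpl. field.
    split; lra. Qed.

Lemma uu_rel lam mu k : 0 < mu -> 0 < lam ->
  lam * uu (lam / mu) k = (lam + mu * (INR (S k) + 1)) * uu (lam / mu) (S k).
Proof. intros. unfold uu. rewrite !rising_S, !S_INR. assert (0 < lam / mu) by (apply Rdiv_lt_0_compat; auto).
  assert (0 < rising (lam / mu + 1) k) by (apply rising_pos; lra).
  pose proof (pos_INR k). set (th := lam / mu) in *. replace lam with (th * mu) by (unfold th; field; lra).
  simpl. field. repeat split; lra. Qed.

Lemma uu_rel0 lam mu : 0 < mu -> 0 < lam -> (lam + mu * (INR 0 + 1)) * uu (lam / mu) 0 = lam.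
Proof. intros. unfold uu. assert (0 < lam / mu) by (apply Rdiv_lt_0_compat; auto).
  set (th := lam / mu) in *. replace lam with (th * mu) by (unfold th; field; lra).
  simpl. field. lra. Qed.

Lemma uu_nonneg th k : 0 <= th -> 0 <= uu th k.
Proof. intros. unfold uu. apply Rdiv_le_0_compat. apply pow_le; auto. apply rising_pos; auto. Qed.

Lemma uu_le th k : 0 <= th -> uu th k <= th ^ (S k) / INR (fact (S k)).
Proof. intros. unfold uu. unfold Rdiv. apply Rmult_le_compat_l. apply pow_le; auto.
  apply Rinv_le_contravar. apply lt_0_INR, lt_O_fact. apply rising_ge_fact; auto. Qed.

Lemma pistar_le th j : 0 <= th -> pistar th j <= th ^ j / INR (fact j).
Proof. intros. unfold pistar. replace (j + 1)%nat with (S j) by lia.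
  apply Rle_trans with (th ^ j * INR (S j) / INR (fact (S j))).
  unfold Rdiv. apply Rmult_le_compat_l. apply Rmult_le_pos. apply pow_le; auto. apply pos_INR.
  apply Rinv_le_contravar. apply lt_0_INR, lt_O_fact. apply rising_ge_fact; auto.
  rewrite fact_simpl, mult_INR. right. field. split. apply not_0_INR, fact_neq_0. apply not_0_INR; lia. Qed.

Lemma pistar_nonneg th j : 0 <= th -> 0 <= pistar th j.
Proof. intros. unfold pistar. apply Rdiv_le_0_compat. apply Rmult_le_pos. apply pow_le; auto. apply pos_INR.
  apply rising_pos; auto. Qed.

Lemma tele_identity lam (c uk Kk : nat -> R) n :
  (forall k, lam * uk k = c (S k) * uk (S k)) -> c 0%nat * uk 0%nat = lam ->
  sum_lt (fun k => uk k * (lam * Kk (S k) - c k * Kk k)) (S n) = lam * uk n * Kk (S n) - lam * Kk 0%nat.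
Proof. intros H1 H0. induction n.
  - simpl. rewrite <- H0. ring.
  - change (sum_lt ?f (S (S n))) with (sum_lt f (S n) + f (S n)). rewrite IHn. simpl.
    specialize (H1 n). replace (lam * uk n * Kk (S n)) with (c (S n) * uk (S n) * Kk (S n)) by (rewrite <- H1; ring). ring. Qed.


Lemma is_derive_Rminus (f g : R -> R) t a b : is_derive f t a -> is_derive g t b ->
  is_derive (fun s => f s - g s) t (a - b).
Proof. intros. apply (is_derive_minus f g t a b); auto. Qed.
Lemma is_derive_Rplus (f g : R -> R) t a b : is_derive f t a -> is_derive g t b ->
  is_derive (fun s => f s + g s) t (a + b).
Proof. intros. apply (is_derive_plus f g t a b); auto. Qed.
Lemma is_derive_Rmult (f g : R -> R) t a b : is_derive f t a -> is_derive g t b ->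
  is_derive (fun s => f s * g s) t (a * g t + f t * b).
Proof. intros. apply (Derive.is_derive_mult f g t a b); auto. Qed.
Lemma is_derive_eq (f : R -> R) t a b : a = b -> is_derive f t a -> is_derive f t b.
Proof. intros ->; auto. Qed.

Lemma sum_lt_delta (g : nat -> R) i n : sum_lt (fun k => if (k =? i)%nat then g k else 0) n = if (i <? n)%nat then g i else 0.
Proof. induction n; simpl. destruct (Nat.ltb_spec i 0); auto; lia.
  rewrite IHn. destruct (Nat.ltb_spec i n); destruct (Nat.ltb_spec i (S n)); destruct (Nat.eqb_spec n i); try lia; subst; try ring. Qed.

Section Trans.
Variables (lam mu : R) (P : R -> nat -> nat -> R).
Hypothesis Hlam : 0 < lam.
Hypothesis Hmu : 0 < mu.
Hypothesis HP : is_transition_fn lam mu P.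

Definition Vs t i x := sum_lt (fun j => P t i j) (S x).

Lemma Vs_bounds t i x : 0 <= t -> 0 <= Vs t i x <= 1.
Proof. intros Ht. destruct HP as [H1 [H2 _]]. split.
  apply sum_lt_nonneg; intros; apply H1; auto.
  apply partial_le_series. intros; apply H1; auto. apply H2; auto. Qed.

Lemma P_le1 t i j : 0 <= t -> P t i j <= 1.
Proof. intros Ht. destruct HP as [H1 [H2 _]]. apply (term_le_series (fun j => P t i j)). intros; apply H1; auto. apply H2; auto. Qed.

Lemma Vs_derive t i x : 0 < t -> is_derive (fun s => Vs s i x) t
  (lam * Vs t (S i) x + mu * sum_lt (fun l => Vs t l x) i - (lam + INR i * mu) * Vs t i x).
Proof. intros Ht. destruct HP as [_ [_ [_ [_ H5]]]]. unfold Vs.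
  apply is_derive_eq with (sum_lt (fun j => backward_rhs lam mu (P t) i j) (S x)).
  2: { apply (is_derive_sum_lt (fun j s => P s i j) (fun j s => backward_rhs lam mu (P s) i j)). intros; apply H5; auto. }
  unfold backward_rhs. rewrite sum_lt_minus, sum_lt_plus, !sum_lt_scal.
  rewrite (sum_lt_swap (fun l j => P t l j)). reflexivity. Qed.

Lemma Vs_RC i x : RC (fun s => Vs s i x).
Proof. destruct HP as [_ [_ [_ [H4 _]]]]. unfold Vs. apply (RC_sum_lt (fun j s => P s i j)). intros j; apply H4. Qed.

Lemma Vs_0 i x : Vs 0 i x = if (i <=? x)%nat then 1 else 0.
Proof. destruct HP as [_ [_ [H3 _]]]. unfold Vs. rewrite (sum_lt_ext _ (fun j => if (j =? i)%nat then 1 else 0)).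
  rewrite sum_lt_delta. destruct (Nat.ltb_spec i (S x)); destruct (Nat.leb_spec i x); auto; lia.
  intros j _. rewrite H3. rewrite Nat.eqb_sym. auto. Qed.

Definition Dl t i x := Vs t i x - Vs t (S i) x.

Lemma Dl_derive t i x : 0 < t -> is_derive (fun s => Dl s i x) t
  (lam * Dl t (S i) x - (lam + mu * (INR i + 1)) * Dl t i x).
Proof. intros Ht. unfold Dl. eapply is_derive_eq. 2: apply is_derive_Rminus; apply Vs_derive; auto.
  req. change (sum_lt ?f (S i)) with (sum_lt f i + f i). rewrite S_INR. ring. Qed.

Definition CC := 1 + exp (lam / mu).

Lemma err_bound_base t i x : 0 <= t -> Rabs (Dl t i x - Kf lam mu t i x) <= CC.
Proof. intros Ht. unfold Dl, CC. pose proof (Vs_bounds t i x Ht). pose proof (Vs_bounds t (S i) x Ht).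
  pose proof (Kf_nonneg lam mu t i x Hlam Hmu Ht). pose proof (Kf_le_exp lam mu t i x Hlam Hmu Ht).
  apply Rabs_le. lra. Qed.

Lemma err_0 i x : Dl 0 i x - Kf lam mu 0 i x = 0.
Proof. unfold Dl. rewrite !Vs_0, Kf_0. destruct (Nat.leb_spec i x); destruct (Nat.leb_spec (S i) x);
  destruct (Nat.eqb_spec i x); try lia; ring. Qed.

Lemma err_derive t i x : 0 < t -> is_derive (fun s => Dl s i x - Kf lam mu s i x) t
  (lam * (Dl t (S i) x - Kf lam mu t (S i) x) - (lam + mu * (INR i + 1)) * (Dl t i x - Kf lam mu t i x)).
Proof. intros. eapply is_derive_eq. 2: apply is_derive_Rminus. 2: apply Dl_derive; auto.
  2: apply Kf_derive; lra. req; ring. Qed.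

Lemma err_RC i x : RC (fun s => Dl s i x - Kf lam mu s i x).
Proof. apply RC_minus. unfold Dl. apply RC_minus; apply Vs_RC. apply Kf_RC; lra. Qed.

Lemma err_induct n : forall i x s, 0 <= s -> Rabs (Dl s i x - Kf lam mu s i x) <= CC * (lam * s) ^ n / INR (fact n).
Proof. induction n; intros i x s Hs.
  - simpl. replace (CC * 1 / 1) with CC by field. apply err_bound_base; auto.
  - destruct (Req_dec s 0). subst. rewrite err_0, Rabs_R0. rewrite Rmult_0_r, pow_i by lia. unfold Rdiv; rewrite Rmult_0_r, Rmult_0_l; lra.
    assert (Hs' : 0 < s) by lra.
    set (c := lam + mu * (INR i + 1)).
    set (e := fun r => Dl r i x - Kf lam mu r i x).
    set (psi := fun r => exp (c * s) * CC * lam ^ (S n) * r ^ (S n) / INR (fact (S n))).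
    assert (Hpsi : forall r, is_derive psi r (exp (c * s) * CC * lam ^ (S n) * r ^ n / INR (fact n))).
    { intros r. unfold psi. rewrite fact_simpl, mult_INR. auto_derive. auto.
      match goal with |- ?a = ?b => change (@eq R a b) end.
      change (match n with 0%nat => 1 | S _ => INR n + 1 end) with (INR (S n)). rewrite S_INR.
      assert (INR (fact n) <> 0) by (apply not_0_INR, fact_neq_0). pose proof (pos_INR n).
      simpl. field. split; lra. }
    set (eS := fun r => Dl r (S i) x - Kf lam mu r (S i) x).
    assert (Hphi : forall r, 0 < r -> is_derive (fun r => exp (c * r) * e r) r (exp (c * r) * (lam * eS r))).
    { intros r Hr. eapply is_derive_eq. 2: apply is_derive_Rmult. 3: apply err_derive; auto.
      2: { auto_derive; auto. } unfold e, eS, c. req. ring. }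
    assert (HRphi : RC (fun r => exp (c * r) * e r)).
    { apply RC_mult. apply RC_derive. auto_derive; auto. apply err_RC. }
    assert (HRpsi : RC psi). { apply RC_derive. eexists; apply Hpsi. }
    assert (Hpsi0 : psi 0 = 0). { unfold psi. rewrite pow_i by lia. unfold Rdiv; ring. }
    assert (He0 : e 0 = 0). { unfold e. apply err_0. }
    assert (Hc : 0 <= c). { unfold c. pose proof (pos_INR i). nra. }
    assert (Hbnd : forall r, 0 < r <= s -> exp (c * r) * Rabs (lam * eS r) <= exp (c * s) * CC * lam ^ S n * r ^ n / INR (fact n)).
    { intros r Hr. assert (exp (c * r) <= exp (c * s)). { destruct (Req_dec c 0). rewrite H0, !Rmult_0_l; lra.
        destruct (Req_dec r s). subst; lra. apply Rlt_le, exp_increasing. nra. }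
      specialize (IHn (S i) x r ltac:(lra)). fold eS in IHn. unfold eS in IHn.
      rewrite Rabs_mult, (Rabs_pos_eq lam) by lra.
      replace (exp (c * s) * CC * lam ^ S n * r ^ n / INR (fact n)) with (exp (c * s) * (lam * (CC * (lam * r) ^ n / INR (fact n)))).
      2: { rewrite Rpow_mult_distr. simpl. field. apply not_0_INR, fact_neq_0. }
      pose proof (exp_pos (c * r)). pose proof (Rabs_pos (eS r)).
      assert (0 <= CC * (lam * r) ^ n / INR (fact n)). eapply Rle_trans. 2: apply IHn. apply Rabs_pos.
      apply Rle_trans with (exp (c * r) * (lam * (CC * (lam * r) ^ n / INR (fact n)))).
      apply Rmult_le_compat_l. lra. apply Rmult_le_compat_l. lra. exact IHn.
      apply Rmult_le_compat_r. nra. auto. }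
    assert (Hneg1 : forall r, 0 < r <= s -> exp (c * r) * (lam * eS r) <= exp (c * s) * CC * lam ^ S n * r ^ n / INR (fact n)).
    { intros r Hr. eapply Rle_trans. 2: apply Hbnd; auto. apply Rmult_le_compat_l. left; apply exp_pos. apply Rle_abs. }
    assert (Hneg2 : forall r, 0 < r <= s -> - (exp (c * r) * (lam * eS r)) <= exp (c * s) * CC * lam ^ S n * r ^ n / INR (fact n)).
    { intros r Hr. eapply Rle_trans. 2: apply Hbnd; auto. replace (-(exp (c * r) * (lam * eS r))) with (exp (c * r) * (-(lam * eS r))) by ring.
      apply Rmult_le_compat_l. left; apply exp_pos.
      rewrite <- Rabs_Ropp. apply Rle_abs. }
    assert (F1 : exp (c * s) * e s - psi s <= exp (c * 0) * e 0 - psi 0).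
    { apply (mono_lemma (fun r => exp (c * r) * e r - psi r)
        (fun r => exp (c * r) * (lam * eS r) - exp (c * s) * CC * lam ^ S n * r ^ n / INR (fact n))).
      exact Hs'.
      intros r Hr. apply is_derive_Rminus. apply Hphi; lra. apply Hpsi.
      intros r Hr. exact (Rle_minus _ _ (Hneg1 r Hr)).
      apply RC_minus; auto. }
    assert (F2 : - (exp (c * s) * e s) - psi s <= - (exp (c * 0) * e 0) - psi 0).
    { apply (mono_lemma (fun r => - (exp (c * r) * e r) - psi r)
        (fun r => - (exp (c * r) * (lam * eS r)) - exp (c * s) * CC * lam ^ S n * r ^ n / INR (fact n))).
      exact Hs'.
      intros r Hr. apply is_derive_Rminus. 2: apply Hpsi.
      apply (is_derive_ext (fun r => -1 * (exp (c * r) * e r))). intros; req; ring.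
      apply (is_derive_eq _ _ (-1 * (exp (c * r) * (lam * eS r)))). req; ring.
      apply (is_derive_scal (fun r => exp (c * r) * e r)). apply Hphi; lra.
      intros r Hr. exact (Rle_minus _ _ (Hneg2 r Hr)).
      apply RC_minus; [|exact HRpsi]. eapply RC_ext. 2: apply (RC_scal (-1)), HRphi. intros; simpl; ring. }
    rewrite He0, Hpsi0 in F1, F2. rewrite Rmult_0_r in F1, F2. unfold psi in F1, F2.
    pose proof (exp_pos (c * s)).
    assert (Heq : exp (c * s) * CC * lam ^ S n * s ^ S n / INR (fact (S n)) = exp (c * s) * (CC * (lam * s) ^ S n / INR (fact (S n)))).
    { rewrite Rpow_mult_distr. field. apply not_0_INR, fact_neq_0. }
    rewrite Heq in F1, F2.
    assert (Habs : exp (c * s) * Rabs (e s) <= exp (c * s) * (CC * (lam * s) ^ S n / INR (fact (S n)))).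
    { clear - F1 F2 H0. set (Q := CC * (lam * s) ^ S n / INR (fact (S n))) in *. set (E := exp (c * s)) in *.
      destruct (Rle_dec 0 (e s)). rewrite Rabs_pos_eq by lra. lra.
      rewrite Rabs_left by lra. lra. }
    apply Rmult_le_reg_l in Habs; auto.
Qed.

Lemma Dl_eq t i x : 0 <= t -> Dl t i x = Kf lam mu t i x.
Proof. intros Ht. apply Rminus_diag_uniq. destruct (Req_dec (Dl t i x - Kf lam mu t i x) 0) as [E|E]; auto.
  exfalso. assert (Hp : 0 < Rabs (Dl t i x - Kf lam mu t i x)) by (apply Rabs_pos_lt; auto).
  assert (HC : 0 < CC) by (unfold CC; pose proof (exp_pos (lam/mu)); lra).
  destruct (pow_fact_lim (lam * t) ltac:(nra) (Rabs (Dl t i x - Kf lam mu t i x) / CC)) as [n Hn].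
  apply Rdiv_lt_0_compat; auto.
  pose proof (err_induct n i x t Ht).
  apply (Rmult_lt_compat_l CC) in Hn; auto.
  replace (CC * (Rabs (Dl t i x - Kf lam mu t i x) / CC)) with (Rabs (Dl t i x - Kf lam mu t i x)) in Hn by (field; lra).
  unfold Rdiv in *. rewrite Rmult_assoc in H. lra. Qed.
End Trans.


Section Trans2.
Variables (lam mu : R) (P : R -> nat -> nat -> R).
Hypothesis Hlam : 0 < lam.
Hypothesis Hmu : 0 < mu.
Hypothesis HP : is_transition_fn lam mu P.

Lemma Vs0_formula t x : 0 <= t ->
  Vs P t 0 x = 1 - uu (lam / mu) x + sum_lt (fun k => uu (lam / mu) k * Kf lam mu t k x) (S x).
Proof. intros Ht.
  set (G := fun s => Vs P s 0 x - (1 - uu (lam / mu) x + sum_lt (fun k => uu (lam / mu) k * Kf lam mu s k x) (S x))).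
  assert (G t = G 0).
  { apply const_lemma; auto.
    - intros r Hr. unfold G. eapply is_derive_eq. 2: apply is_derive_Rminus. 2: apply (Vs_derive lam mu P HP); auto.
      2: apply is_derive_Rplus. 2: apply (is_derive_const (1 - uu (lam/mu) x)).
      2: apply (is_derive_sum_lt (fun k s => uu (lam / mu) k * Kf lam mu s k x)
            (fun k s => uu (lam / mu) k * (lam * Kf lam mu s (S k) x - (lam + mu * (INR k + 1)) * Kf lam mu s k x))).
      2: { intros k. apply is_derive_scal. apply Kf_derive; lra. }
      pose proof (tele_identity lam (fun k => lam + mu * (INR k + 1)) (uu (lam / mu)) (fun k => Kf lam mu r k x) x
        (fun k => uu_rel lam mu k Hmu Hlam) (uu_rel0 lam mu Hmu Hlam)) as T. cbv beta in T. rewrite T.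
      rewrite Kf_gt by lia. simpl sum_lt.
      pose proof (Dl_eq lam mu P Hlam Hmu HP r 0 x ltac:(lra)). unfold Dl in H.
      unfold zero; simpl. rewrite Rmult_0_l, Rplus_0_r. rewrite <- H. req. ring.
    - unfold G. apply RC_minus. apply (Vs_RC lam mu P HP). apply RC_plus. apply RC_const.
      apply (RC_sum_lt (fun k s => uu (lam / mu) k * Kf lam mu s k x)). intros k. apply RC_scal. apply Kf_RC; lra. }
  assert (G 0 = 0).
  { unfold G. rewrite (Vs_0 lam mu P HP). destruct (Nat.leb_spec 0 x); [|lia].
    rewrite (sum_lt_ext _ (fun k => if (k =? x)%nat then uu (lam / mu) k else 0)).
    rewrite sum_lt_delta. destruct (Nat.ltb_spec x (S x)); [|lia]. ring.
    intros k _. rewrite Kf_0. destruct (Nat.eqb_spec k x); ring. }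
  unfold G in H, H0. lra. Qed.

Lemma Vs_formula t i x : 0 <= t -> Vs P t i x = Vs P t 0 x - sum_lt (fun k => Kf lam mu t k x) i.
Proof. intros Ht. induction i. simpl; ring.
  pose proof (Dl_eq lam mu P Hlam Hmu HP t i x Ht). unfold Dl in H. simpl. lra. Qed.

Lemma sum_lt_trunc (f : nat -> R) i x : (forall k, (x < k)%nat -> f k = 0) ->
  sum_lt f i = sum_lt (fun k => f k * (if (k <? i)%nat then 1 else 0)) (S x).
Proof. intros Hf. induction i.
  - simpl. rewrite (sum_lt_ext _ (fun _ => 0)). rewrite sum_lt_const; ring. intros k _. ring.
  - simpl sum_lt at 1. rewrite IHi.
    assert (E : sum_lt (fun k => f k * (if (k <? S i)%nat then 1 else 0)) (S x) =
      sum_lt (fun k => f k * (if (k <? i)%nat then 1 else 0)) (S x) + sum_lt (fun k => if (k =? i)%nat then f k else 0) (S x)).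
    { rewrite <- sum_lt_plus. apply sum_lt_ext. intros k _. destruct (Nat.ltb_spec k (S i)); destruct (Nat.ltb_spec k i);
      destruct (Nat.eqb_spec k i); try lia; ring. }
    rewrite E, sum_lt_delta. destruct (Nat.ltb_spec i (S x)). auto. rewrite Hf by lia. ring. Qed.

Variable tau : nat -> R.
Hypothesis Htau : is_prob tau.

Lemma law_series t j : 0 <= t -> is_series (fun i => tau i * P t i j) (law_at tau P t j).
Proof. intros Ht. destruct Htau as [Ht1 Ht2]. unfold law_at.
  assert (ex_series (fun i => tau i * P t i j)). 2: apply Series_correct; auto.
  apply (@ex_series_le R_AbsRing R_CompleteNormedModule _ tau). intros n. unfold norm; simpl. unfold abs; simpl.
  destruct HP as [H1 _]. rewrite Rabs_pos_eq. pose proof (P_le1 lam mu P HP t n j Ht). pose proof (Ht1 n). pose proof (H1 t n j Ht). nra.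
  apply Rmult_le_pos; auto. exists 1; auto. Qed.

Lemma law_nonneg t j : 0 <= t -> 0 <= law_at tau P t j.
Proof. intros Ht. apply (series_nonneg (fun i => tau i * P t i j)). intros. destruct Htau as [Ht1 _]; destruct HP as [H1 _].
  apply Rmult_le_pos; auto. apply law_series; auto. Qed.

Lemma tail_series k : is_series (fun i => tau i * (if (k <? i)%nat then 1 else 0)) (1 - sum_lt tau (S k)).
Proof. destruct Htau as [_ Ht2]. eapply is_series_ext. 2: apply (is_series_minus _ _ _ _ Ht2 (is_series_finite tau (S k))).
  intros n. unfold minus, plus, opp; simpl. destruct (Nat.ltb_spec k n); destruct (Nat.ltb_spec n (S k)); try lia; ring. Qed.

Lemma Lsum_series t x : 0 <= t -> is_series (fun i => tau i * Vs P t i x) (sum_lt (law_at tau P t) (S x)).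
Proof. intros Ht. eapply is_series_ext. 2: apply (is_series_sum_lt (fun j i => tau i * P t i j)).
  2: intros; apply law_series; auto. intros i. unfold Vs. rewrite sum_lt_scal. reflexivity. Qed.

Lemma Lsum_formula t x : 0 <= t -> sum_lt (law_at tau P t) (S x) =
  Vs P t 0 x - sum_lt (fun k => Kf lam mu t k x * (1 - sum_lt tau (S k))) (S x).
Proof. intros Ht. pose proof (Lsum_series t x Ht) as H1. apply is_series_unique in H1. rewrite <- H1.
  assert (H2 := is_series_minus _ _ _ _ (is_series_scal_r (Vs P t 0 x) _ _ (proj2 Htau))
    (is_series_sum_lt (fun k i => Kf lam mu t k x * (tau i * (if (k <? i)%nat then 1 else 0))) _ (S x) (fun k => is_series_scal (Kf lam mu t k x) _ _ (tail_series k)))).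
  apply is_series_unique in H2.
  replace (Series (fun i => tau i * Vs P t i x)) with (Series
          (fun n : nat =>
           plus (tau n * Vs P t 0 x)
             (opp
                (sum_lt
                   (fun k : nat =>
                    Kf lam mu t k x *
                    (tau n * (if (k <? n)%nat then 1 else 0))) 
                   (S x))))).
  etransitivity. apply H2. unfold plus, opp, scal; simpl. unfold mult; simpl. ring.
  apply Series_ext. intros i. change (plus ?a (opp ?b)) with (a - b). rewrite (Vs_formula t i x Ht).
  rewrite (sum_lt_trunc _ i x). rewrite Rmult_minus_distr_l, <- sum_lt_scal.
  f_equal. apply sum_lt_ext. intros; ring.
  intros k Hk. apply Kf_gt; auto. Qed.

Lemma E_formula t x : 0 <= t ->
  sum_lt (fun j => law_at tau P t j - pistar (lam / mu) j) (S x) =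
  sum_lt (fun k => Kf lam mu t k x * (sum_lt tau (S k) - sum_lt (pistar (lam / mu)) (S k))) (S x).
Proof. intros Ht. assert (0 <= lam / mu) by (apply Rlt_le, Rdiv_lt_0_compat; auto).
  rewrite sum_lt_minus, Lsum_formula, Vs0_formula, pistar_sum by auto.
  rewrite (sum_lt_ext (fun k => Kf lam mu t k x * (sum_lt tau (S k) - sum_lt (pistar (lam / mu)) (S k)))
    (fun k => uu (lam / mu) k * Kf lam mu t k x - Kf lam mu t k x * (1 - sum_lt tau (S k)))).
  rewrite sum_lt_minus. ring.
  intros k _. rewrite pistar_sum by auto. ring. Qed.

Lemma Lsum_le1 t x : 0 <= t -> sum_lt (law_at tau P t) (S x) <= 1.
Proof. intros Ht. destruct Htau as [Ht1 Ht2].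
  apply (series_le_bound _ _ _ (Lsum_series t x Ht)). intros n.
  apply Rle_trans with (sum_lt tau n). apply sum_lt_le. intros i _. pose proof (Vs_bounds lam mu P HP t i x Ht).
  pose proof (Ht1 i). nra. apply partial_le_series; auto. Qed.
End Trans2.

Definition dp (m : nat) (y : R) := (y + 1) ^ m - y ^ m.

Lemma dp_rec m y : dp (S m) y = (y + 1) * dp m y + y ^ m.
Proof. unfold dp. simpl. ring. Qed.

Lemma dp_nonneg m y : 0 <= y -> 0 <= dp m y.
Proof. intros Hy. induction m. unfold dp; simpl; lra. rewrite dp_rec.
  pose proof (pow_le y m Hy). nra. Qed.

Lemma dp_mono m y z : 0 <= y <= z -> dp m y <= dp m z.
Proof. intros Hyz. induction m. unfold dp; simpl; lra. rewrite !dp_rec.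
  pose proof (pow_incr y z m Hyz). pose proof (dp_nonneg m y ltac:(lra)).
  assert ((y + 1) * dp m y <= (z + 1) * dp m z). apply Rmult_le_compat; lra. lra. Qed.

Lemma dp_ge m y : (1 <= m)%nat -> 0 <= y -> y ^ (m - 1) <= dp m y.
Proof. intros Hm Hy. destruct m. lia. rewrite dp_rec. replace (S m - 1)%nat with m by lia.
  pose proof (dp_nonneg m y Hy). nra. Qed.

Lemma dp_le m y : 0 <= y -> dp m y <= (y + 1) ^ m.
Proof. intros Hy. unfold dp. pose proof (pow_le y m Hy). lra. Qed.

Lemma pow_le_fact_exp y m : 0 <= y -> y ^ m <= INR (fact m) * exp y.
Proof. intros Hy. pose proof (pow_fact_le_exp y m Hy). assert (0 < INR (fact m)) by (apply lt_0_INR, lt_O_fact).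
  apply (Rmult_le_compat_l (INR (fact m))) in H; [|lra]. unfold Rdiv in H.
  rewrite <- Rmult_assoc, (Rmult_comm _ (y ^ m)), Rmult_assoc, Rinv_r, Rmult_1_r in H; lra. Qed.

Lemma exp_c_n c n : exp (c + INR n) = exp c * exp 1 ^ n.
Proof. induction n. simpl. rewrite Rplus_0_r; ring. rewrite S_INR. replace (c + (INR n + 1)) with ((c + INR n) + 1) by ring.
  rewrite exp_plus, IHn. simpl. ring. Qed.

Lemma ex_series_poly_exp c p th : 0 <= c -> 0 <= th ->
  ex_series (fun n => (c + INR n) ^ p * (th ^ n / INR (fact n))).
Proof. intros Hc Hth.
  apply (@ex_series_le R_AbsRing R_CompleteNormedModule _ (fun n => INR (fact p) * exp c * ((exp 1 * th) ^ n / INR (fact n)))).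
  - intros n. unfold norm; simpl; unfold abs; simpl. pose proof (pos_INR n).
    assert (0 <= th ^ n / INR (fact n)) by (apply Rdiv_le_0_compat; [apply pow_le; auto| apply lt_0_INR, lt_O_fact]).
    rewrite Rabs_pos_eq. 2: apply Rmult_le_pos; auto; apply pow_le; lra.
    rewrite Rpow_mult_distr. pose proof (pow_le_fact_exp (c + INR n) p ltac:(lra)). rewrite exp_c_n in H1.
    replace (INR (fact p) * exp c * (exp 1 ^ n * th ^ n / INR (fact n))) with (INR (fact p) * (exp c * exp 1 ^ n) * (th ^ n / INR (fact n))) by (unfold Rdiv; ring).
    apply Rmult_le_compat_r; auto.
  - apply (@ex_series_scal R_AbsRing R_CompleteNormedModule (INR (fact p) * exp c)). apply ex_series_pow_fact. Qed.

Lemma mono_nat (G : nat -> R) : (forall n, G n <= G (S n)) -> forall k n, (k <= n)%nat -> G k <= G n.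
Proof. intros H k n Hkn. induction Hkn. lra. specialize (H m). lra. Qed.

Lemma binom_fact a b n : (a + b) ^ n / INR (fact n) =
  sum_f_R0 (fun k => a ^ k / INR (fact k) * (b ^ (n - k) / INR (fact (n - k)))) n.
Proof. rewrite binomial. unfold Rdiv at 1. rewrite Rmult_comm, scal_sum. apply sum_eq. intros i Hi.
  unfold Binomial.C. assert (INR (fact n) <> 0) by (apply not_0_INR, fact_neq_0).
  assert (INR (fact i) <> 0) by (apply not_0_INR, fact_neq_0).
  assert (INR (fact (n - i)) <> 0) by (apply not_0_INR, fact_neq_0). field. auto. Qed.

Lemma poisson_dom (G : nat -> R) a th : 0 <= a <= th -> (forall n, 0 <= G n) -> (forall n, G n <= G (S n)) ->
  ex_series (fun n => G n * (th ^ n / INR (fact n))) ->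
  ex_series (fun n => G n * (a ^ n / INR (fact n))) /\
  exp (- a) * Series (fun n => G n * (a ^ n / INR (fact n))) <= exp (- th) * Series (fun n => G n * (th ^ n / INR (fact n))).
Proof. intros Ha HG Hmon Hex.
  assert (Hpf : forall x n, 0 <= x -> 0 <= x ^ n / INR (fact n)).
  { intros. apply Rdiv_le_0_compat. apply pow_le; auto. apply lt_0_INR, lt_O_fact. }
  assert (Hexa : ex_series (fun n => G n * (a ^ n / INR (fact n)))).
  { apply (@ex_series_le R_AbsRing R_CompleteNormedModule _ (fun n => G n * (th ^ n / INR (fact n)))); [|exact Hex].
    intros n. unfold norm; simpl; unfold abs; simpl. rewrite Rabs_pos_eq.
    apply Rmult_le_compat_l; auto. unfold Rdiv. apply Rmult_le_compat_r. left; apply Rinv_0_lt_compat, lt_0_INR, lt_O_fact.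
    apply pow_incr; lra. apply Rmult_le_pos; auto. apply Hpf; lra. }
  split; auto.
  set (b := th - a).
  assert (HA := Series_correct _ Hexa).
  assert (HB := is_series_exp b).
  assert (HC := is_series_mult _ _ _ _ HA HB).
  assert (Habs1 : ex_series (fun n => Rabs (G n * (a ^ n / INR (fact n))))).
  { eapply ex_series_ext. 2: exact Hexa. intros n. rewrite Rabs_pos_eq; auto. apply Rmult_le_pos; auto. apply Hpf; lra. }
  assert (Habs2 : ex_series (fun n => Rabs (b ^ n / INR (fact n)))).
  { eapply ex_series_ext. 2: apply ex_series_pow_fact. intros n. rewrite Rabs_pos_eq; auto. apply Hpf; unfold b; lra. }
  specialize (HC Habs1 Habs2).
  apply is_series_unique in HC.
  assert (Hle : Series (fun n => sum_f_R0 (fun k => G k * (a ^ k / INR (fact k)) * (b ^ (n - k) / INR (fact (n - k)))) n)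
     <= Series (fun n => G n * (th ^ n / INR (fact n)))).
  { apply Series_le; auto. intros n. split.
    - apply cond_pos_sum. intros k. apply Rmult_le_pos. apply Rmult_le_pos; auto. apply Hpf; lra. apply Hpf; unfold b; lra.
    - replace th with (a + b) by (unfold b; ring). rewrite binom_fact. rewrite scal_sum.
      apply sum_Rle. intros k Hk. rewrite Rmult_assoc. rewrite (Rmult_comm _ (G n)).
      apply Rmult_le_compat_r. apply Rmult_le_pos; apply Hpf; unfold b; lra.
      apply mono_nat; auto. }
  rewrite HC in Hle.
  replace (exp (- th)) with (exp (- a) * exp (- b)) by (rewrite <- exp_plus; f_equal; unfold b; ring).
  assert (exp (- b) * exp b = 1) by (rewrite <- exp_plus, Rplus_opp_l, exp_0; auto).
  pose proof (exp_pos (- a)). pose proof (exp_pos (- b)).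
  set (SA := Series (fun n => G n * (a ^ n / INR (fact n)))) in *.
  set (ST := Series (fun n => G n * (th ^ n / INR (fact n)))) in *.
  apply (Rmult_le_compat_l (exp (- a) * exp (- b))) in Hle. 2: nra.
  replace (exp (- a) * exp (- b) * (SA * exp b)) with (exp (- a) * SA * (exp (- b) * exp b)) in Hle by ring.
  rewrite H, Rmult_1_r in Hle. exact Hle. Qed.


Definition hterm (m : nat) (th y : R) (rho : nat) :=
  exp (- th) * th ^ rho / INR (fact rho) * (y + INR rho) ^ (m - 1).

Lemma h_series m th y : 0 <= y -> 0 <= th -> is_series (hterm m th y) (h m th y).
Proof. intros Hy Hth. unfold h. apply Series_correct.
  eapply ex_series_ext. 2: apply (@ex_series_scal R_AbsRing R_CompleteNormedModule (exp (- th))), (ex_series_poly_exp y (m - 1) th); auto.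
  intros n. unfold hterm, scal; simpl; unfold mult; simpl. unfold Rdiv; ring. Qed.

Lemma hterm_nonneg m th y rho : 0 <= y -> 0 <= th -> 0 <= hterm m th y rho.
Proof. intros. unfold hterm. apply Rmult_le_pos. apply Rdiv_le_0_compat. apply Rmult_le_pos. left; apply exp_pos.
  apply pow_le; auto. apply lt_0_INR, lt_O_fact. apply pow_le. pose proof (pos_INR rho); lra. Qed.

Lemma h_nonneg m th y : 0 <= y -> 0 <= th -> 0 <= h m th y.
Proof. intros. apply (series_nonneg (hterm m th y)). intros; apply hterm_nonneg; auto. apply h_series; auto. Qed.

Lemma cdf_interval f k y : INR k < y < INR k + 1 -> cdf f y = sum_lt f (S k).
Proof. intros Hy. unfold cdf. apply is_series_unique. eapply is_series_ext. 2: apply is_series_finite.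
  intros n. simpl. destruct (Nat.ltb_spec n (S k)); destruct (Rle_dec (INR n) y); auto.
  exfalso. apply n0. assert (INR n <= INR k) by (apply le_INR; lia). lra.
  exfalso. assert (INR (S k) <= INR n) by (apply le_INR; lia). rewrite S_INR in H0. lra. Qed.

Lemma continuous_sum_lt (F : nat -> R -> R) n y : (forall k, continuous (F k) y) ->
  continuous (fun z => sum_lt (fun k => F k z) n) y.
Proof. intros H. induction n; simpl. apply continuous_const. apply (continuous_plus (fun z => sum_lt (fun k => F k z) n) (F n)); auto. Qed.

Lemma poly_RInt m th k R : (1 <= m)%nat ->
  is_RInt (fun y => sum_lt (hterm m th y) R) (INR k) (INR k + 1)
    (sum_lt (fun rho => exp (- th) * th ^ rho / INR (fact rho) * dp m (INR k + INR rho) / INR m) R).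
Proof. intros Hm.
  assert (Hm0 : INR m <> 0) by (apply not_0_INR; lia).
  set (F := fun y => sum_lt (fun rho => exp (- th) * th ^ rho / INR (fact rho) * (y + INR rho) ^ m / INR m) R).
  assert (HF : forall y, is_derive F y (sum_lt (hterm m th y) R)).
  { intros y. unfold F. apply (is_derive_sum_lt (fun rho y => exp (- th) * th ^ rho / INR (fact rho) * (y + INR rho) ^ m / INR m)
      (fun rho y => hterm m th y rho)). intros rho. unfold hterm. auto_derive. auto. req.
    replace (Nat.pred m) with (m - 1)%nat by lia. field. split; auto. apply not_0_INR, fact_neq_0. }
  assert (E : sum_lt (fun rho => exp (- th) * th ^ rho / INR (fact rho) * dp m (INR k + INR rho) / INR m) R = minus (F (INR k + 1)) (F (INR k))).
  { unfold F. change (minus ?a ?b) with (a - b). rewrite <- sum_lt_minus. apply sum_lt_ext. intros rho _. unfold dp.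
    replace (INR k + 1 + INR rho) with (INR k + INR rho + 1) by ring. field. split; auto. apply not_0_INR, fact_neq_0. }
  rewrite E. apply (@is_RInt_derive R_CompleteNormedModule F). intros; apply HF.
  intros y _. apply (continuous_sum_lt (fun rho y => hterm m th y rho)). intros rho.
  apply (ex_derive_continuous (fun y => hterm m th y rho)). unfold hterm. auto_derive. auto. Qed.

Lemma ex_series_wdp m th k : 0 <= th ->
  ex_series (fun rho => exp (- th) * th ^ rho / INR (fact rho) * dp m (INR k + INR rho)).
Proof. intros Hth.
  apply (@ex_series_le R_AbsRing R_CompleteNormedModule _ (fun n => exp (- th) * ((INR k + 1 + INR n) ^ m * (th ^ n / INR (fact n))))).
  - intros n. unfold norm; simpl; unfold abs; simpl. pose proof (pos_INR n). pose proof (pos_INR k).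
    assert (0 <= th ^ n / INR (fact n)) by (apply Rdiv_le_0_compat; [apply pow_le; auto| apply lt_0_INR, lt_O_fact]).
    pose proof (dp_nonneg m (INR k + INR n) ltac:(lra)). pose proof (dp_le m (INR k + INR n) ltac:(lra)).
    pose proof (exp_pos (- th)).
    rewrite Rabs_pos_eq. replace (INR k + 1 + INR n) with (INR k + INR n + 1) by ring.
    replace (exp (- th) * th ^ n / INR (fact n) * dp m (INR k + INR n)) with (exp (- th) * (dp m (INR k + INR n) * (th ^ n / INR (fact n)))) by (unfold Rdiv; ring).
    apply Rmult_le_compat_l. lra. apply Rmult_le_compat_r; auto.
    replace (exp (- th) * th ^ n / INR (fact n) * dp m (INR k + INR n)) with (exp (- th) * (dp m (INR k + INR n) * (th ^ n / INR (fact n)))) by (unfold Rdiv; ring).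
    apply Rmult_le_pos; [lra|]. apply Rmult_le_pos; auto.
  - apply (@ex_series_scal R_AbsRing R_CompleteNormedModule (exp (- th))). apply ex_series_poly_exp; auto.
    pose proof (pos_INR k); lra. Qed.

Lemma IP_bound m th (tau pis : nat -> R) k : (1 <= m)%nat -> 0 <= th ->
  ex_RInt (fun y => h m th y * Rabs (cdf tau y - cdf pis y)) (INR k) (INR k + 1) ->
  Rabs (sum_lt tau (S k) - sum_lt pis (S k)) *
    Series (fun rho => exp (- th) * th ^ rho / INR (fact rho) * dp m (INR k + INR rho))
  <= INR m * RInt (fun y => h m th y * Rabs (cdf tau y - cdf pis y)) (INR k) (INR k + 1).
Proof. intros Hm Hth Hex. set (Dk := Rabs (sum_lt tau (S k) - sum_lt pis (S k))).
  assert (HDk : 0 <= Dk) by apply Rabs_pos.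
  assert (Hm0 : 0 < INR m) by (apply lt_0_INR; lia).
  assert (HS := Series_correct _ (ex_series_wdp m th k Hth)).
  apply (is_series_scal Dk) in HS.
  apply (series_le_bound _ _ _ HS). intros R.
  rewrite sum_lt_scal.
  assert (HR := poly_RInt m th k R Hm).
  apply (is_RInt_scal _ _ _ Dk) in HR.
  assert (Hle : RInt (fun y => scal Dk (sum_lt (hterm m th y) R)) (INR k) (INR k + 1) <=
     RInt (fun y => h m th y * Rabs (cdf tau y - cdf pis y)) (INR k) (INR k + 1)).
  { apply RInt_le. lra. eexists; exact HR. exact Hex.
    intros y Hy. rewrite !(cdf_interval _ k y) by lra. fold Dk. unfold scal; simpl; unfold mult; simpl.
    pose proof (pos_INR k). rewrite (Rmult_comm (h m th y)). apply Rmult_le_compat_l; auto.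
    apply partial_le_series. intros; apply hterm_nonneg; lra. apply h_series; lra. }
  assert (HRI : RInt (fun y => scal Dk (sum_lt (hterm m th y) R)) (INR k) (INR k + 1) = scal Dk (sum_lt (fun rho => exp (- th) * th ^ rho / INR (fact rho) * dp m (INR k + INR rho) / INR m) R)).
  { apply is_RInt_unique. exact HR. }
  rewrite HRI in Hle.
  unfold scal in Hle; simpl in Hle; unfold mult in Hle; simpl in Hle.
  replace (sum_lt (fun rho => exp (- th) * th ^ rho / INR (fact rho) * dp m (INR k + INR rho) / INR m) R)
    with (/ INR m * sum_lt (fun rho => exp (- th) * th ^ rho / INR (fact rho) * dp m (INR k + INR rho)) R) in Hle.
  2: { rewrite <- sum_lt_scal. apply sum_lt_ext. intros; field; repeat split; try lra; apply not_0_INR, fact_neq_0. }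
  apply (Rmult_le_compat_l (INR m)) in Hle; [|lra].
  replace (INR m * (Dk * (/ INR m * sum_lt (fun rho => exp (- th) * th ^ rho / INR (fact rho) * dp m (INR k + INR rho)) R)))
    with (Dk * sum_lt (fun rho => exp (- th) * th ^ rho / INR (fact rho) * dp m (INR k + INR rho)) R) in Hle by (field; lra).
  exact Hle. Qed.

Lemma RInt_gen_bound (g : R -> R) K : (forall y, 0 <= y -> 0 <= g y) ->
  is_RInt_gen g (at_point 0) (Rbar_locally p_infty) K ->
  forall b, 0 <= b -> ex_RInt g 0 b /\ RInt g 0 b <= K.
Proof. intros Hg HK.
  assert (Hget : forall eps, 0 < eps -> forall b, exists c, b <= c /\ exists y, is_RInt g 0 c y /\ Rabs (y - K) < eps).
  { intros eps He b. assert (H := HK (ball K eps) (locally_ball K (mkposreal eps He))).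
    unfold filtermapi in H. destruct H as [Q Rr HQ HR Hall]. destruct HR as [M HM].
    exists (Rmax b M + 1). split. pose proof (Rmax_l b M); lra.
    destruct (Hall 0 (Rmax b M + 1) HQ (HM (Rmax b M + 1) ltac:(pose proof (Rmax_r b M); lra))) as [y [Hy1 Hy2]].
    exists y. split; auto. }
  intros b Hb.
  destruct (Hget 1 ltac:(lra) b) as [c [Hbc [y [Hy _]]]].
  assert (Hex : ex_RInt g 0 b). { apply (@ex_RInt_Chasles_1 R_CompleteNormedModule g 0 b c). lra. eexists; exact Hy. }
  split; auto.
  destruct (Rle_dec (RInt g 0 b) K) as [|Hn]; auto. exfalso.
  destruct (Hget (RInt g 0 b - K) ltac:(lra) b) as [c' [Hbc' [y' [Hy' Hy'2]]]].
  assert (Hex2 : ex_RInt g b c'). { apply (@ex_RInt_Chasles_2 R_CompleteNormedModule g 0 b c'). lra. eexists; exact Hy'. }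
  assert (HC := RInt_Chasles g 0 b c' Hex Hex2).
  rewrite (is_RInt_unique _ _ _ _ Hy') in HC.
  assert (0 <= RInt g b c'). { apply RInt_ge_0; auto. intros; apply Hg; lra. }
  change (plus ?a ?b) with (a + b) in HC. apply Rabs_def2 in Hy'2. lra. Qed.

Lemma RInt_sum_pieces (g : R -> R) : (forall b, 0 <= b -> ex_RInt g 0 b) ->
  forall N, RInt g 0 (INR N) = sum_lt (fun k => RInt g (INR k) (INR k + 1)) N.
Proof. intros Hex N. induction N.
  - simpl. apply (RInt_point 0 g).
  - simpl sum_lt. rewrite <- IHN. rewrite S_INR.
    assert (H0 := Hex (INR N + 1) ltac:(pose proof (pos_INR N); lra)).
    pose proof (pos_INR N).
    rewrite <- (RInt_Chasles g 0 (INR N) (INR N + 1)). reflexivity.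
    apply (@ex_RInt_Chasles_1 R_CompleteNormedModule g 0 (INR N) (INR N + 1)); auto. lra.
    apply (@ex_RInt_Chasles_2 R_CompleteNormedModule g 0 (INR N) (INR N + 1)); auto. lra. Qed.

Lemma sbp (f d : nat -> R) N : sum_lt (fun j => f j * d j) (S N) =
  f N * sum_lt d (S N) - sum_lt (fun x => (f (S x) - f x) * sum_lt d (S x)) N.
Proof. induction N. simpl. ring.
  change (sum_lt (fun j => f j * d j) (S (S N))) with (sum_lt (fun j => f j * d j) (S N) + f (S N) * d (S N)).
  rewrite IHN. change (sum_lt d (S (S N))) with (sum_lt d (S N) + d (S N)).
  change (sum_lt (fun x => (f (S x) - f x) * sum_lt d (S x)) (S N)) with
    (sum_lt (fun x => (f (S x) - f x) * sum_lt d (S x)) N + (f (S N) - f N) * sum_lt d (S N)). ring. Qed.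

Lemma harm n j : (1 <= n)%nat -> INR j / 2 <= sum_lt (fun x => if (n <=? x)%nat then / INR x else 0) (2 ^ j * n).
Proof. intros Hn. induction j.
  - simpl. apply Rle_trans with 0. lra. apply sum_lt_nonneg. intros i _. destruct (Nat.leb_spec n i).
    left; apply Rinv_0_lt_compat, lt_0_INR; lia. lra.
  - replace (2 ^ S j * n)%nat with (2 ^ j * n + 2 ^ j * n)%nat by (simpl; lia).
    rewrite sum_lt_add_range. set (p := (2 ^ j * n)%nat) in *.
    assert (Hp : (n <= p)%nat). { unfold p. pose proof (Nat.pow_nonzero 2 j ltac:(lia)). nia. }
    assert (Hp0 : 0 < INR p) by (apply lt_0_INR; lia).
    assert (sum_lt (fun _ => / (2 * INR p)) p <= sum_lt (fun i => if (n <=? p + i)%nat then / INR (p + i) else 0) p).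
    { apply sum_lt_le. intros i Hi. destruct (Nat.leb_spec n (p + i)); [|lia].
      apply Rinv_le_contravar. apply lt_0_INR; lia. rewrite plus_INR. assert (INR i <= INR p) by (apply le_INR; lia). lra. }
    rewrite sum_lt_const in H. replace (INR p * / (2 * INR p)) with (/ 2) in H by (field; lra).
    rewrite S_INR. lra. Qed.

Lemma exp_le_mono a b : a <= b -> exp a <= exp b.
Proof. intros H. destruct (Req_dec a b). subst; lra. left; apply exp_increasing; lra. Qed.

Section Final.
Variables (lam mu : R) (P : R -> nat -> nat -> R) (tau : nat -> R) (m : nat) (K t : R).
Hypothesis Hlam : 0 < lam.
Hypothesis Hmu : 0 < mu.
Hypothesis HP : is_transition_fn lam mu P.
Hypothesis Htau : is_prob tau.
Hypothesis Hm : (1 <= m)%nat.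
Hypothesis Ht : 0 <= t.

Let th := lam / mu.
Lemma Hth : 0 <= th. Proof. unfold th. apply Rlt_le, Rdiv_lt_0_compat; auto. Qed.

Definition Dd k := sum_lt tau (S k) - sum_lt (pistar (lam / mu)) (S k).
Definition Wk k := Series (fun rho => exp (- (lam / mu)) * (lam / mu) ^ rho / INR (fact rho) * dp m (INR k + INR rho)).
Definition ct := exp (- mu * t - lam / mu * (exp (- mu * t) + mu * t - 1)).

Lemma ct_eq : ct = exp (- mu * t - lam * t) * exp (aa lam mu t).
Proof. unfold ct, aa. rewrite <- exp_plus. f_equal. field. lra. Qed.

Lemma Kf_shift k n : Kf lam mu t k (k + n) = exp (- (mu * (INR k + 1) + lam) * t) * (aa lam mu t ^ n / INR (fact n)).
Proof. unfold Kf. destruct (Nat.leb_spec k (k + n)); [|lia]. replace (k + n - k)%nat with n by lia. unfold Rdiv; ring. Qed.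

Lemma per_k k N : sum_lt (fun x => dp m (INR x) * Kf lam mu t k x) N <= ct * Wk k.
Proof.
  pose proof Hth as Hth0. fold th in Hth0.
  set (G := fun n => dp m (INR k + INR n)).
  assert (HGnn : forall n, 0 <= G n). { intros n. unfold G. apply dp_nonneg. pose proof (pos_INR k); pose proof (pos_INR n); lra. }
  assert (HGmon : forall n, G n <= G (S n)). { intros n. unfold G. apply dp_mono. rewrite S_INR. pose proof (pos_INR k); pose proof (pos_INR n); lra. }
  assert (HexG : ex_series (fun n => G n * (th ^ n / INR (fact n)))).
  { eapply ex_series_ext. 2: apply (@ex_series_scal R_AbsRing R_CompleteNormedModule (exp th)), (ex_series_wdp m th k Hth0).
    intros n. unfold G, scal; simpl; unfold mult; simpl.
    replace (exp th * (exp (- th) * th ^ n / INR (fact n) * dp m (INR k + INR n))) with ((exp th * exp (- th)) * (dp m (INR k + INR n) * (th ^ n / INR (fact n)))) by (unfold Rdiv; ring).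
    rewrite <- exp_plus, Rplus_opp_r, exp_0. ring. }
  assert (Ha : 0 <= aa lam mu t <= th). { split. apply aa_nonneg; auto. apply aa_le; auto. }
  destruct (poisson_dom G (aa lam mu t) th Ha HGnn HGmon HexG) as [Hexa Hdom].
  assert (HWk : Wk k = exp (- th) * Series (fun n => G n * (th ^ n / INR (fact n)))).
  { unfold Wk. fold th. rewrite <- Series_scal_l. apply Series_ext. intros n. unfold G. unfold Rdiv; ring. }
  set (SA := Series (fun n => G n * (aa lam mu t ^ n / INR (fact n)))) in *.
  set (ST := Series (fun n => G n * (th ^ n / INR (fact n)))) in *.
  set (E := exp (- mu * t - lam * t)).
  assert (HSA : 0 <= SA). { apply (series_nonneg (fun n => G n * (aa lam mu t ^ n / INR (fact n)))).
    intros n. apply Rmult_le_pos; auto. apply Rdiv_le_0_compat. apply pow_le; lra. apply lt_0_INR, lt_O_fact.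
    apply Series_correct; auto. }
  assert (HE : 0 < E) by apply exp_pos.
  assert (Hsum : sum_lt (fun x => dp m (INR x) * Kf lam mu t k x) N <= E * SA).
  { destruct (Compare_dec.le_lt_dec N k) as [HNk|HNk].
    - rewrite (sum_lt_ext _ (fun _ => 0)). rewrite sum_lt_const. nra.
      intros x Hx. rewrite Kf_gt by lia. ring.
    - replace N with (k + (N - k))%nat by lia. rewrite sum_lt_add_range.
      rewrite (sum_lt_ext (fun x => dp m (INR x) * Kf lam mu t k x) (fun _ => 0) k).
      2: { intros x Hx. rewrite Kf_gt by lia. ring. }
      rewrite sum_lt_const, Rmult_0_r, Rplus_0_l.
      apply Rle_trans with (sum_lt (fun n => E * (G n * (aa lam mu t ^ n / INR (fact n)))) (N - k)).
      + apply sum_lt_le. intros n _. rewrite Kf_shift. unfold G. rewrite plus_INR.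
        assert (exp (- (mu * (INR k + 1) + lam) * t) <= E).
        { unfold E. apply exp_le_mono. pose proof (pos_INR k). assert (0 <= mu * INR k * t) by (apply Rmult_le_pos; auto; apply Rmult_le_pos; lra). nra. }
        assert (0 <= aa lam mu t ^ n / INR (fact n)). apply Rdiv_le_0_compat. apply pow_le; lra. apply lt_0_INR, lt_O_fact.
        pose proof (HGnn n). unfold G in H1. pose proof (exp_pos (- (mu * (INR k + 1) + lam) * t)).
        replace (dp m (INR k + INR n) * (exp (- (mu * (INR k + 1) + lam) * t) * (aa lam mu t ^ n / INR (fact n))))
          with (exp (- (mu * (INR k + 1) + lam) * t) * (dp m (INR k + INR n) * (aa lam mu t ^ n / INR (fact n)))) by ring.
        apply Rmult_le_compat_r. apply Rmult_le_pos; auto. auto.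
      + rewrite sum_lt_scal. apply Rmult_le_compat_l. lra. apply partial_le_series.
        intros n. apply Rmult_le_pos; auto. apply Rdiv_le_0_compat. apply pow_le; lra. apply lt_0_INR, lt_O_fact.
        apply Series_correct; auto. }
  rewrite ct_eq, HWk. fold E.
  assert (SA <= exp (aa lam mu t) * (exp (- th) * ST)).
  { apply (Rmult_le_compat_l (exp (aa lam mu t))) in Hdom. 2: left; apply exp_pos.
    rewrite <- Rmult_assoc, <- exp_plus, Rplus_opp_r, exp_0, Rmult_1_l in Hdom. exact Hdom. }
  apply Rle_trans with (E * SA); auto.
  replace (E * exp (aa lam mu t) * (exp (- th) * ST)) with (E * (exp (aa lam mu t) * (exp (- th) * ST))) by ring.
  apply Rmult_le_compat_l; lra. Qed.


Hypothesis HK : is_RInt_gen (fun x => h m (lam / mu) x * Rabs (cdf tau x - cdf (pistar (lam / mu)) x))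
    (at_point 0) (Rbar_locally p_infty) K.

Definition gg := fun x => h m (lam / mu) x * Rabs (cdf tau x - cdf (pistar (lam / mu)) x).

Lemma gg_nonneg y : 0 <= y -> 0 <= gg y.
Proof. intros. unfold gg. apply Rmult_le_pos. apply h_nonneg; auto. apply Hth. apply Rabs_pos. Qed.

Lemma HI b : 0 <= b -> ex_RInt gg 0 b /\ RInt gg 0 b <= K.
Proof. apply RInt_gen_bound. apply gg_nonneg. exact HK. Qed.

Lemma Hpiece k : ex_RInt gg (INR k) (INR k + 1).
Proof. pose proof (pos_INR k). apply (@ex_RInt_Chasles_2 R_CompleteNormedModule gg 0 (INR k) (INR k + 1)). lra.
  apply HI; lra. Qed.

Lemma ct_pos : 0 < ct. Proof. apply exp_pos. Qed.

Lemma core N : sum_lt (fun x => dp m (INR x) * Rabs (sum_lt (fun k => Kf lam mu t k x * Dd k) (S x))) N <= INR m * K * ct.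
Proof.
  apply Rle_trans with (sum_lt (fun x => sum_lt (fun k => Rabs (Dd k) * (dp m (INR x) * Kf lam mu t k x)) N) N).
  { apply sum_lt_le. intros x Hx.
    assert (Hdp : 0 <= dp m (INR x)) by (apply dp_nonneg, pos_INR).
    eapply Rle_trans. apply Rmult_le_compat_l. auto. apply sum_lt_abs.
    rewrite <- sum_lt_scal. rewrite (sum_lt_zero_tail (fun k => Rabs (Dd k) * (dp m (INR x) * Kf lam mu t k x)) (S x) N); [|lia|].
    2: { intros i Hi. rewrite Kf_gt by lia. ring. }
    apply sum_lt_le. intros k _. rewrite Rabs_mult, (Rabs_pos_eq (Kf _ _ _ _ _)) by (apply Kf_nonneg; auto). right; ring. }
  rewrite sum_lt_swap.
  apply Rle_trans with (sum_lt (fun k => ct * (INR m * RInt gg (INR k) (INR k + 1))) N).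
  { apply sum_lt_le. intros k _. rewrite sum_lt_scal.
    apply Rle_trans with (Rabs (Dd k) * (ct * Wk k)). apply Rmult_le_compat_l. apply Rabs_pos. apply per_k.
    replace (Rabs (Dd k) * (ct * Wk k)) with (ct * (Rabs (Dd k) * Wk k)) by ring.
    apply Rmult_le_compat_l. left; apply ct_pos.
    apply (IP_bound m (lam / mu) tau (pistar (lam / mu)) k Hm Hth (Hpiece k)). }
  rewrite sum_lt_scal, sum_lt_scal. rewrite <- RInt_sum_pieces.
  2: { intros b Hb. apply HI; auto. }
  pose proof (proj2 (HI (INR N) (pos_INR N))). pose proof ct_pos. pose proof (pos_INR m). fold gg in H.
  replace (INR m * K * ct) with (ct * (INR m * K)) by ring.
  apply Rmult_le_compat_l. lra. apply Rmult_le_compat_l; auto. Qed.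

End Final.

Lemma uu_le2 th N : 0 <= th -> uu th N <= th * (th ^ N / INR (fact N)).
Proof. intros Hth. eapply Rle_trans. apply uu_le; auto.
  assert (0 < INR (fact N)) by (apply lt_0_INR, lt_O_fact). assert (1 <= INR (S N)) by (apply (le_INR 1); lia).
  set (X := th * (th ^ N / INR (fact N))).
  assert (0 <= X) by (unfold X; apply Rmult_le_pos; auto; apply Rdiv_le_0_compat; auto; apply pow_le; auto).
  replace (th ^ S N / INR (fact (S N))) with (X * / INR (S N)).
  2: { unfold X. rewrite fact_simpl, mult_INR. change (th ^ S N) with (th * th ^ N). field. split; lra. }
  assert (/ INR (S N) <= 1). { rewrite <- Rinv_1. apply Rinv_le_contravar; lra. }
  rewrite <- (Rmult_1_r X) at 2. apply Rmult_le_compat_l; auto. Qed.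

Lemma final_main (lam mu : R) (P : R -> nat -> nat -> R)
  (tau : nat -> R) (m : nat) (K t : R) :
  0 < lam -> 0 < mu ->
  is_transition_fn lam mu P ->
  is_prob tau ->
  (1 <= m)%nat ->
  is_RInt_gen
    (fun x => h m (lam / mu) x * Rabs (cdf tau x - cdf (pistar (lam / mu)) x))
    (at_point 0) (Rbar_locally p_infty) K ->
  0 <= t ->
  exists v : R,
    is_series (fun j => INR j ^ m * (law_at tau P t j - pistar (lam / mu) j)) v /\
    Rabs v <= INR m * K * ct lam mu t.
Proof.
  intros Hlam Hmu HP Htau Hm HK Ht.
  assert (Hth : 0 <= lam / mu) by (apply Rlt_le, Rdiv_lt_0_compat; auto).
  set (B := INR m * K * ct lam mu t).
  set (d := fun j => law_at tau P t j - pistar (lam / mu) j).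
  set (Ex := fun x => sum_lt d (S x)).
  set (f := fun j : nat => INR j ^ m).
  assert (HEx : forall x, Ex x = sum_lt (fun k => Kf lam mu t k x * Dd lam mu tau k) (S x)).
  { intros x. unfold Ex, d, Dd. apply E_formula; auto. }
  assert (Hcore : forall N, sum_lt (fun x => dp m (INR x) * Rabs (Ex x)) N <= B).
  { intros N. unfold B. rewrite (sum_lt_ext _ (fun x => dp m (INR x) * Rabs (sum_lt (fun k => Kf lam mu t k x * Dd lam mu tau k) (S x)))).
    apply core; auto. intros x _. rewrite HEx. auto. }
  assert (Hsbp : forall N, sum_lt (fun j => f j * d j) (S N) = f N * Ex N - sum_lt (fun x => dp m (INR x) * Ex x) N).
  { intros N. rewrite sbp. unfold Ex. f_equal. apply sum_lt_ext. intros x _. unfold f, dp. rewrite S_INR. auto. }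
  assert (HA : forall N, Rabs (sum_lt (fun x => dp m (INR x) * Ex x) N) <= B).
  { intros N. eapply Rle_trans. apply sum_lt_abs. eapply Rle_trans. 2: apply (Hcore N).
    apply sum_lt_le. intros x _. rewrite Rabs_mult, (Rabs_pos_eq (dp m (INR x))). lra. apply dp_nonneg, pos_INR. }
  assert (Hpf : forall x n, 0 <= x -> 0 <= x ^ n / INR (fact n)).
  { intros. apply Rdiv_le_0_compat. apply pow_le; auto. apply lt_0_INR, lt_O_fact. }
  assert (HM1 := ex_series_poly_exp 0 m (lam / mu) ltac:(lra) Hth).
  set (M1 := Series (fun n => (0 + INR n) ^ m * ((lam / mu) ^ n / INR (fact n)))).
  assert (HM1s : is_series (fun n => (0 + INR n) ^ m * ((lam / mu) ^ n / INR (fact n))) M1) by (apply Series_correct; auto).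
  assert (HM1t : forall n, 0 <= (0 + INR n) ^ m * ((lam / mu) ^ n / INR (fact n))).
  { intros n. apply Rmult_le_pos. apply pow_le. pose proof (pos_INR n); lra. apply Hpf; auto. }
  assert (Hpi_ex : ex_series (fun j => f j * pistar (lam / mu) j)).
  { apply (@ex_series_le R_AbsRing R_CompleteNormedModule _ (fun n => (0 + INR n) ^ m * ((lam / mu) ^ n / INR (fact n)))); [|exists M1; auto].
    intros n. unfold norm; simpl; unfold abs; simpl. unfold f. rewrite Rplus_0_l.
    pose proof (pistar_nonneg (lam / mu) n Hth). pose proof (pow_le (INR n) m (pos_INR n)).
    rewrite Rabs_pos_eq by (apply Rmult_le_pos; auto). apply Rmult_le_compat_l; auto. apply pistar_le; auto. }
  set (SP := Series (fun j => f j * pistar (lam / mu) j)).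
  assert (HSP : is_series (fun j => f j * pistar (lam / mu) j) SP) by (apply Series_correct; auto).
  assert (Hfnn : forall j, 0 <= f j) by (intros; apply pow_le, pos_INR).
  assert (HfE : forall N, f N * Ex N <= lam / mu * M1).
  { intros N. assert (HEN : Ex N <= uu (lam / mu) N).
    { unfold Ex, d. rewrite sum_lt_minus, pistar_sum by auto. pose proof (Lsum_le1 lam mu P HP tau Htau t N Ht). lra. }
    apply Rle_trans with (f N * uu (lam / mu) N). apply Rmult_le_compat_l; auto.
    apply Rle_trans with (f N * (lam / mu * ((lam / mu) ^ N / INR (fact N)))).
    apply Rmult_le_compat_l; auto. apply uu_le2; auto.
    replace (f N * (lam / mu * ((lam / mu) ^ N / INR (fact N)))) with (lam / mu * ((0 + INR N) ^ m * ((lam / mu) ^ N / INR (fact N)))).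
    2: { unfold f. rewrite Rplus_0_l. ring. }
    apply Rmult_le_compat_l; auto. apply (term_le_series _ _ N HM1t HM1s). }
  set (u := fun N => sum_lt (fun j => f j * law_at tau P t j) N).
  assert (Hlaw_nn : forall j, 0 <= f j * law_at tau P t j).
  { intros j. apply Rmult_le_pos; auto. apply (law_nonneg lam mu P HP tau Htau); auto. }
  assert (Hu_inc : forall N, u N <= u (S N)). { intros N. unfold u. simpl. pose proof (Hlaw_nn N). lra. }
  assert (Hu_bnd : forall N, u (S N) <= lam / mu * M1 + B + SP).
  { intros N. unfold u. rewrite (sum_lt_ext _ (fun j => f j * d j + f j * pistar (lam / mu) j)).
    2: { intros; unfold d; ring. }
    rewrite sum_lt_plus, Hsbp. pose proof (HfE N). pose proof (HA N).
    pose proof (Rle_abs (- sum_lt (fun x => dp m (INR x) * Ex x) N)). rewrite Rabs_Ropp in H1.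
    pose proof (partial_le_series _ _ (S N) (fun j => Rmult_le_pos _ _ (Hfnn j) (pistar_nonneg _ j Hth)) HSP).
    lra. }
  destruct (ex_finite_lim_seq_incr u (lam / mu * M1 + B + SP) Hu_inc) as [l Hl].
  { intros N. destruct N. eapply Rle_trans. apply Hu_inc. apply Hu_bnd. apply Hu_bnd. }
  assert (Hls : is_series (fun j => f j * law_at tau P t j) l) by (apply is_series_sum_lt_iff; exact Hl).
  assert (Hvs : is_series (fun j => f j * d j) (l - SP)).
  { eapply is_series_ext. 2: apply (is_series_minus _ _ _ _ Hls HSP). intros n. unfold f, d. change (plus ?a (opp ?b)) with (a - b). match goal with |- ?a = ?b => change (@eq R a b) end. ring. }
  exists (l - SP). split. exact Hvs.
  set (v := l - SP) in *.
  assert (Hlim : is_lim_seq (fun N => sum_lt (fun j => f j * d j) (S N)) v).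
  { apply is_series_sum_lt_iff in Hvs. apply (is_lim_seq_incr_1 (fun N => sum_lt (fun j => f j * d j) N)). exact Hvs. }
  destruct (Rle_dec (Rabs v) B) as [|Hn]; auto. exfalso.
  set (eps := (Rabs v - B) / 2).
  assert (Heps : 0 < eps) by (unfold eps; lra).
  apply is_lim_seq_spec in Hlim. destruct (Hlim (mkposreal eps Heps)) as [N0 HN0].
  set (N1 := Nat.max N0 1).
  assert (Hkey : forall x, (N1 <= x)%nat -> eps * / INR x <= dp m (INR x) * Rabs (Ex x)).
  { intros x Hx. specialize (HN0 x ltac:(lia)). change (Rabs (sum_lt (fun j => f j * d j) (S x) - v) < eps) in HN0. rewrite Hsbp in HN0.
    set (A := sum_lt (fun x0 => dp m (INR x0) * Ex x0) x) in *.
    set (S0 := f x * Ex x) in *.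
    assert (Rabs v <= Rabs (S0 - A - v) + Rabs S0 + Rabs A).
    { replace v with (- (S0 - A - v) + (S0 - A)) at 1 by ring.
      eapply Rle_trans. apply Rabs_triang. rewrite Rabs_Ropp.
      pose proof (Rabs_triang S0 (- A)). rewrite Rabs_Ropp in H. change (S0 - A) with (S0 + - A). lra. }
    pose proof (HA x). fold A in H0.
    assert (HS0 : eps <= Rabs S0) by (unfold eps in *; lra).
    assert (Hx0 : 0 < INR x) by (apply lt_0_INR; lia).
    assert (Hfx : f x = INR x * INR x ^ (m - 1)).
    { unfold f. rewrite tech_pow_Rmult. f_equal. lia. }
    assert (Rabs S0 <= INR x * (dp m (INR x) * Rabs (Ex x))).
    { unfold S0. rewrite Rabs_mult, (Rabs_pos_eq (f x)) by auto. rewrite Hfx.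
      rewrite Rmult_assoc. apply Rmult_le_compat_l. lra. apply Rmult_le_compat_r. apply Rabs_pos.
      apply dp_ge; auto. apply pos_INR. }
    apply (Rmult_le_reg_l (INR x)); auto. rewrite <- Rmult_assoc, (Rmult_comm (INR x) eps), Rmult_assoc, Rinv_r, Rmult_1_r by lra.
    lra. }
  destruct (INR_unbounded (2 * B / eps)) as [j Hj].
  assert (HN1 : (1 <= N1)%nat) by lia.
  pose proof (harm N1 j HN1) as Hh.
  assert (Hs : eps * sum_lt (fun x => if (N1 <=? x)%nat then / INR x else 0) (2 ^ j * N1) <=
     sum_lt (fun x => dp m (INR x) * Rabs (Ex x)) (2 ^ j * N1)).
  { rewrite <- sum_lt_scal. apply sum_lt_le. intros x _. destruct (Nat.leb_spec N1 x).
    apply Hkey; auto. rewrite Rmult_0_r. apply Rmult_le_pos. apply dp_nonneg, pos_INR. apply Rabs_pos. }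
  pose proof (Hcore (2 ^ j * N1)%nat).
  assert (eps * (INR j / 2) <= eps * sum_lt (fun x => if (N1 <=? x)%nat then / INR x else 0) (2 ^ j * N1)).
  { apply Rmult_le_compat_l; lra. }
  assert (2 * B < eps * INR j).
  { apply (Rmult_lt_compat_l eps) in Hj; auto. unfold Rdiv in Hj. rewrite (Rmult_comm (2 * B)), <- Rmult_assoc, Rinv_r, Rmult_1_l in Hj by lra. lra. }
  lra.
Qed.


Theorem mainTheorem6 (lam mu : R) (P : R -> nat -> nat -> R)
  (tau : nat -> R) (m : nat) (K t : R) :
  0 < lam -> 0 < mu ->
  is_transition_fn lam mu P ->
  is_prob tau ->
  (1 <= m)%nat ->
  ex_series (fun n => tau n * INR n ^ m) ->
  is_RInt_gen
    (fun x => h m (lam / mu) x * Rabs (cdf tau x - cdf (pistar (lam / mu)) x))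
    (at_point 0) (Rbar_locally p_infty) K ->
  0 <= t ->
  exists v : R,
    is_series (fun j => INR j ^ m * (law_at tau P t j - pistar (lam / mu) j)) v /\
    Rabs v <= INR m * K *
      exp (- mu * t - (lam / mu) * (exp (- mu * t) + mu * t - 1)).
Proof.
  intros Hlam Hmu HP Htau Hm _ HK Ht.
  exact (final_main lam mu P tau m K t Hlam Hmu HP Htau Hm HK Ht).
Qed.
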